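(* For $k\in\mathbb Z$ and $a\in\mathbb Z_{\ge0}$ let ${\boldsymbol{\mathsf X}}_k(a)={\boldsymbol{\mathsf x}}_{k+1}(a)+{\boldsymbol{\mathsf y}}_k(a)$. Then for every two-rowed array ${\boldsymbol{\mathsf X}}$ (as in the context): (1) $\mathcal F({\boldsymbol{\mathsf X}}_k(2a))={\boldsymbol{\mathsf X}}_{k+2}(2a)$; (2) $\mathcal F({\boldsymbol{\mathsf X}}+{\boldsymbol{\mathsf X}}_k(2a))=\mathcal F({\boldsymbol{\mathsf X}})+{\boldsymbol{\mathsf X}}_{k+2}(2a)$; (3) $\tilde f({\boldsymbol{\mathsf X}}+{\boldsymbol{\mathsf X}}_k(2a))=\tilde f({\boldsymbol{\mathsf X}})+{\boldsymbol{\mathsf X}}_k(2a)$ (with the convention $0+{\boldsymbol{\mathsf Y}}=0$).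
   Context: A two-rowed array is a family ${\boldsymbol{\mathsf X}}=({\sf x}_k;{\sf y}_k)_{k\in\mathbb Z}$ of non-negative integers with ${\sf x}_k={\sf y}_k=0$ for all but finitely many $k$; sums and differences are componentwise. ${\boldsymbol{\mathsf x}}_k(a)$ (resp. ${\boldsymbol{\mathsf y}}_k(a)$) is the array with ${\sf x}_k=a$ (resp. ${\sf y}_k=a$) and all other entries $0$. For $z\in\mathbb Z_{\ge0}$ write $z=2\,\mathrm{quo}(z)+\mathrm{rem}(z)$ with $\mathrm{rem}(z)\in\{0,1\}$. The map $\mathcal F$: given ${\boldsymbol{\mathsf X}}=({\sf x}_k;{\sf y}_k)$, put for all $k\in\mathbb Z$: ${\sf y}'_k=\mathrm{rem}({\sf y}_k)+2\,\mathrm{quo}({\sf y}_{k-1})$; ${\sf z}_k=\min\{{\sf x}_k,{\sf y}'_k\}$; ${\sf X}_k={\sf x}_k-{\sf z}_k+{\sf z}_{k-1}$; $\widetilde{\sf Y}_k={\sf y}'_k-{\sf z}_k+{\sf z}_{k-1}$; $\widetilde{\sf X}_k=\mathrm{rem}({\sf X}_k)+2\,\mathrm{quo}({\sf X}_{k-1})$; and $\mathcal F({\boldsymbol{\mathsf X}})=(\widetilde{\sf X}_k;\widetilde{\sf Y}_k)_{k\in\mathbb Z}$. Signature rule: the signature of ${\boldsymbol{\mathsf X}}$ is the finite sequence $\sigma({\boldsymbol{\mathsf X}})=(\cdots\,-^{{\sf y}_{k+1}}\,+^{{\sf x}_{k+1}}\,-^{{\sf y}_k}\,+^{{\sf x}_k}\,-^{{\sf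 y}_{k-1}}\,+^{{\sf x}_{k-1}}\cdots)$ (read left to right with $k$ decreasing; superscripts are multiplicities). Repeatedly cancel a pair $(+,-)$ in which the $+$ is to the left of the $-$ with only canceled symbols between them, until the reduced signature $\overline\sigma({\boldsymbol{\mathsf X}})$ has the form $(-\cdots-+\cdots+)$. If the leftmost $+$ of $\overline\sigma({\boldsymbol{\mathsf X}})$ comes from $+^{{\sf x}_k}$, then $\tilde f{\boldsymbol{\mathsf X}}={\boldsymbol{\mathsf X}}-{\boldsymbol{\mathsf x}}_k(1)+{\boldsymbol{\mathsf y}}_k(1)$; if $\overline\sigma({\boldsymbol{\mathsf X}})$ has no $+$, then $\tilde f{\boldsymbol{\mathsf X}}=0$. *)

(* Defs.v *)
From mathcomp Require Import all_boot all_order all_algebra.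
From Stdlib Require Import ClassicalEpsilon.
Set Implicit Arguments. Unset Strict Implicit. Unset Printing Implicit Defensive.
Import Order.TTheory GRing.Theory Num.Theory.

Record arr := Arr { ax : int -> nat; ay : int -> nat }.

Definition bounds (N : nat) (X : arr) : Prop :=
  forall k : int, (N < absz k)%N -> ax X k = 0%N /\ ay X k = 0%N.

Definition finsupp (X : arr) : Prop := exists N, bounds N X.

Definition arr_add (X Y : arr) : arr :=
  Arr (fun k => ax X k + ax Y k)%N (fun k => ay X k + ay Y k)%N.
Definition arr_sub (X Y : arr) : arr :=
  Arr (fun k => ax X k - ax Y k)%N (fun k => ay X k - ay Y k)%N.

Definition xarr (k : int) (a : nat) : arr :=
  Arr (fun j => if j == k then a else 0%N) (fun _ => 0%N).
Definition yarr (k : int) (a : nat) : arr :=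
  Arr (fun _ => 0%N) (fun j => if j == k then a else 0%N).

Definition Xarr (k : int) (a : nat) : arr := arr_add (xarr (k + 1)%R a) (yarr k a).

Definition quo (z : nat) : nat := z./2.
Definition rem (z : nat) : nat := odd z.

Definition Fmap (X : arr) : arr :=
  let y' := fun k => (rem (ay X k) + 2 * quo (ay X (k - 1)%R))%N in
  let z := fun k => minn (ax X k) (y' k) in
  let Xk := fun k => (ax X k - z k + z (k - 1)%R)%N in
  let Yt := fun k => (y' k - z k + z (k - 1)%R)%N in
  let Xt := fun k => (rem (Xk k) + 2 * quo (Xk (k - 1)%R))%N in
  Arr Xt Yt.

(* Signature symbols: (true, k) is a "+" coming from x_k, (false, k) a "-"
   coming from y_k.  The signature over the window [-N, N], read left to right
   with k decreasing: ... -^{y_k} +^{x_k} ... *)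
Definition window (N : nat) : seq int :=
  [seq (N%:Z - i%:Z)%R | i <- iota 0 (N + N).+1].

Definition signature_win (N : nat) (X : arr) : seq (bool * int) :=
  flatten [seq nseq (ay X k) (false, k) ++ nseq (ax X k) (true, k) | k <- window N].

Fixpoint cancel1 (s : seq (bool * int)) : option (seq (bool * int)) :=
  match s with
  | a :: ((b :: t) as t') =>
      if a.1 && ~~ b.1 then Some t else omap (cons a) (cancel1 t')
  | _ => None
  end.

Fixpoint reduce_iter (n : nat) (s : seq (bool * int)) : seq (bool * int) :=
  match n with
  | 0 => s
  | n'.+1 => match cancel1 s with Some s' => reduce_iter n' s' | None => s end
  end.

(* Repeat the cancellation until no (+,-) pair remains (at most size s steps). *)
Definition reduce (s : seq (bool * int)) := reduce_iter (size s) s.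

(* A canonical bound of the support (meaningful when X has finite support). *)
Definition supp_bound (X : arr) : nat :=
  epsilon (inhabits 0%N) (fun N => bounds N X).

Definition reduced_signature (X : arr) : seq (bool * int) :=
  reduce (signature_win (supp_bound X) X).

(* f~ : None stands for 0. *)
Definition ftilde (X : arr) : option arr :=
  match [seq p <- reduced_signature X | p.1] with
  | p :: _ => Some (arr_add (arr_sub X (xarr p.2 1)) (yarr p.2 1))
  | [::] => None
  end.

(* Main.v *)
Require Import Defs.
From mathcomp Require Import all_boot all_order all_algebra zify.
From Stdlib Require Import FunctionalExtensionality ClassicalEpsilon.
Import Order.TTheory GRing.Theory Num.Theory.

Definition push (a : bool * int) (t : seq (bool * int)) :=
  if t is b :: t' then (if a.1 && ~~ b.1 then t' else a :: t) else [:: a].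
Definition nf (s : seq (bool * int)) := foldr push [::] s.

Lemma push_minus u b : b.1 = false -> push b u = b :: u.
Proof. by case: u => [|c u] //= ->. Qed.

Lemma cancel1_cons a b t : cancel1 (a :: b :: t) =
  if a.1 && ~~ b.1 then Some t else omap (cons a) (cancel1 (b :: t)).
Proof. by []. Qed.

Lemma cancel1_nf s s' : cancel1 s = Some s' -> nf s' = nf s.
Proof.
elim: s s' => [|a t IH] s' //.
case: t IH => [|b t'] IH //.
rewrite cancel1_cons.
case H: (a.1 && ~~ b.1).
  move=> [<-]. move/andP: H => [Ha Hb].
  rewrite [nf (a :: _)]/= (@push_minus _ b (negbTE Hb)).
  by rewrite /push Ha Hb.
case E: (cancel1 (b :: t')) => [s''|] //= [<-] /=.
by rewrite (IH _ E).
Qed.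

Lemma cancel1_none s : cancel1 s = None -> nf s = s.
Proof.
elim: s => [|a t IH] //.
case: t IH => [|b t'] IH //.
rewrite cancel1_cons.
case H: (a.1 && ~~ b.1) => //.
case E: (cancel1 (b :: t')) => [s''|] //= _.
by have := IH E; rewrite [nf _]/= => ->; rewrite /push H.
Qed.

Lemma cancel1_size s s' : cancel1 s = Some s' -> size s = (size s').+2.
Proof.
elim: s s' => [|a t IH] s' //.
case: t IH => [|b t'] IH //.
rewrite cancel1_cons.
case H: (a.1 && ~~ b.1); first by move=> [<-].
case E: (cancel1 (b :: t')) => [s''|] //= [<-] /=.
by have := IH _ E; rewrite /= => ->.
Qed.

Lemma reduce_iter_nf n s : (size s <= n)%N -> reduce_iter n s = nf s.
Proof.
elim: n s => [|n IH] s /=.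
  by case: s.
move=> Hs; case E: (cancel1 s) => [s'|].
  rewrite IH; first exact: (@cancel1_nf s s' E). move: Hs; rewrite (@cancel1_size s s' E). lia.
by rewrite cancel1_none.
Qed.

Lemma reduce_nf s : reduce s = nf s.
Proof. exact: reduce_iter_nf. Qed.

Lemma nf_cat u v : nf (u ++ v) = foldr push (nf v) u.
Proof. by rewrite /nf foldr_cat. Qed.

Lemma nf_minus n q v : q.1 = false -> nf (nseq n q ++ v) = nseq n q ++ nf v.
Proof. move=> Hq; elim: n => [|n IH] //=; by rewrite IH push_minus. Qed.

Lemma foldr_plus n m p q t : p.1 = true -> q.1 = false -> (n <= m)%N ->
  foldr push (nseq m q ++ t) (nseq n p) = nseq (m - n) q ++ t.
Proof.
move=> Hp Hq; elim: n => [|n IH] Hnm /=; first by rewrite subn0.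
rewrite IH; last lia.
have -> : (m - n = (m - n.+1).+1)%N by lia.
by rewrite /= Hp Hq.
Qed.

Lemma nf_cancel u n p q v : p.1 = true -> q.1 = false ->
  nf (u ++ nseq n p ++ nseq n q ++ v) = nf (u ++ v).
Proof.
move=> Hp Hq; rewrite !nf_cat; congr foldr.
by rewrite -nf_cat nf_minus // foldr_plus // subnn.
Qed.

Lemma nf_sub s : {subset nf s <= s}.
Proof.
elim: s => [|a t IH] //= x Hx.
have : x \in a :: nf t.
  move: Hx; rewrite /push; case: (nf t) => [|b t'] //.
  case: ifP => _ // H; by rewrite !inE H !orbT.
rewrite !inE => /orP [H|/IH H]; by rewrite H ?orbT.
Qed.

Lemma rem_add2 y c : Defs.rem (y + 2 * c) = Defs.rem y.
Proof. by rewrite /Defs.rem oddD mul2n odd_double addbF. Qed.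

Lemma quo_add2 y c : quo (y + 2 * c) = (quo y + c)%N.
Proof. by rewrite /quo halfD mul2n odd_double andbF doubleK. Qed.

Definition ypf X j := (Defs.rem (ay X j) + 2 * quo (ay X (j - 1)%R))%N.
Definition zf X j := minn (ax X j) (ypf X j).
Definition Xkf X j := (ax X j - zf X j + zf X (j - 1)%R)%N.
Definition Ytf X j := (ypf X j - zf X j + zf X (j - 1)%R)%N.
Definition Xtf X j := (Defs.rem (Xkf X j) + 2 * quo (Xkf X (j - 1)%R))%N.

Lemma Fmap_eq X : Fmap X = Arr (Xtf X) (Ytf X).
Proof. by []. Qed.

Lemma eq_sub1 (j k : int) : (j - 1 == k)%R = (j == k + 1)%R.
Proof. by apply/eqP/eqP; lia. Qed.

Section Add.
Variables (X : arr) (k : int) (b : nat).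
Let X' := arr_add X (Xarr k (2 * b)).
Let dd j := if j == (k + 1)%R then (2 * b)%N else 0%N.

Lemma ax_X' j : ax X' j = (ax X j + dd j)%N.
Proof. by rewrite /X' /= addn0. Qed.

Lemma ay_X' j : ay X' j = (ay X j + if j == k then 2 * b else 0)%N.
Proof. by rewrite /X' /=. Qed.

Lemma yp_X' j : ypf X' j = (ypf X j + dd j)%N.
Proof.
rewrite /ypf !ay_X' /dd -eq_sub1.
case: (j == k); case: (j - 1 == k)%R; rewrite ?rem_add2 ?quo_add2 ?addn0; lia.
Qed.

Lemma z_X' j : zf X' j = (zf X j + dd j)%N.
Proof. rewrite /zf yp_X' ax_X'; lia. Qed.

Lemma Xk_X' j : Xkf X' j = (Xkf X j + dd (j - 1)%R)%N.
Proof.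
rewrite /Xkf !z_X' ax_X'.
have : (zf X j <= ax X j)%N by rewrite /zf geq_minl.
lia.
Qed.

Lemma Yt_X' j : Ytf X' j = (Ytf X j + dd (j - 1)%R)%N.
Proof.
rewrite /Ytf !z_X' yp_X'.
have : (zf X j <= ypf X j)%N by rewrite /zf geq_minr.
lia.
Qed.

Lemma Xt_X' j : Xtf X' j = (Xtf X j + dd (j - 1 - 1)%R)%N.
Proof.
rewrite /Xtf !Xk_X' /dd.
case: (j - 1 - 1 == k + 1)%R; case: (j - 1 == k + 1)%R;
  rewrite ?rem_add2 ?quo_add2 ?addn0; lia.
Qed.

End Add.

Lemma Fmap_add X k b :
  Fmap (arr_add X (Xarr k (2*b))) = arr_add (Fmap X) (Xarr (k+2)%R (2*b)).
Proof.
rewrite !Fmap_eq /arr_add /=; congr Arr; apply: functional_extensionality => j.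
  rewrite Xt_X' addn0; congr addn.
  have -> : (j - 1 - 1 == k + 1)%R = (j == k + 2 + 1)%R by apply/eqP/eqP; lia.
  by [].
rewrite Yt_X' add0n; congr addn.
have -> : (j - 1 == k + 1)%R = (j == k + 2)%R by apply/eqP/eqP; lia.
by [].
Qed.

Lemma Fmap_Xarr k b : Fmap (Xarr k (2*b)) = Xarr (k+2)%R (2*b).
Proof.
pose Z := Arr (fun _ => 0%N) (fun _ => 0%N).
have HZ Y : arr_add Z Y = Y by case: Y => f g; rewrite /arr_add /=.
have FZ : Fmap Z = Z by [].
by rewrite -{1}(HZ (Xarr k (2*b))) Fmap_add FZ HZ.
Qed.

Definition blk X j := nseq (ay X j) (false, j) ++ nseq (ax X j) (true, j).

Lemma sig_blk N X : signature_win N X = flatten (map (blk X) (window N)).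
Proof. by []. Qed.

Lemma window_S M : window M.+1 = Posz M.+1 :: window M ++ [:: (- Posz M.+1)%R].
Proof.
rewrite /window.
have -> : ((M.+1 + M.+1).+1 = 1 + ((M + M).+1 + 1))%N by lia.
rewrite iotaD iotaD /= map_cat /=.
congr (_ :: _ :: _); first lia; first lia.
congr (_ ++ _); last by congr (_ :: _); lia.
have -> : ((0 + 1).+1 = 1 + 1)%N by [].
rewrite iotaDl -map_comp; apply: eq_map => i /=; lia.
Qed.

Lemma bounds_mono N M X : bounds N X -> (N <= M)%N -> bounds M X.
Proof. move=> H NM j Hj; apply: H; lia. Qed.

Lemma blk0 X N j : bounds N X -> (N < absz j)%N -> blk X j = [::].
Proof. by move=> H /H [Hx Hy]; rewrite /blk Hx Hy. Qed.

Lemma sig_win_S X N M : bounds N X -> (N <= M)%N ->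
  signature_win M.+1 X = signature_win M X.
Proof.
move=> H NM; rewrite !sig_blk window_S /= map_cat flatten_cat /=.
rewrite (@blk0 X N (Posz M.+1) H) ?(@blk0 X N (- Posz M.+1)%R H) /= ?cats0 //; lia.
Qed.

Lemma sig_win_ext X N M : bounds N X -> (N <= M)%N ->
  signature_win M X = signature_win N X.
Proof.
move=> H; elim: M => [|M IH] NM; first by have -> : N = 0%N by lia.
case: (ltngtP N M.+1) NM => // [NM _|<- //].
rewrite (@sig_win_S X N M H) ?IH //; lia.
Qed.

Lemma supp_bound_spec X : finsupp X -> bounds (supp_bound X) X.
Proof. by move=> H; rewrite /supp_bound; apply: (epsilon_spec (inhabits 0%N) (fun N => bounds N X)). Qed.

Lemma red_sig X N : bounds N X ->
  reduced_signature X = nf (signature_win N X).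
Proof.
move=> H.
have HS : bounds (supp_bound X) X by apply: supp_bound_spec; exists N.
rewrite /reduced_signature reduce_nf.
rewrite -(@sig_win_ext X _ _ HS (leq_maxl _ N)) (@sig_win_ext X _ _ H (leq_maxr _ N)) //.
Qed.

Lemma mem_sig N X p : p \in signature_win N X -> p.1 -> (0 < ax X p.2)%N.
Proof.
move/flattenP => [s /mapP [j _ ->]].
rewrite mem_cat !mem_nseq => /orP [/andP [_ /eqP -> //] | /andP [H /eqP -> _ //]].
Qed.

Section Core.
Variables (X : arr) (k : int) (b : nat).
Let X' := arr_add X (Xarr k b).

Lemma blk_ne j : j != k -> j != (k + 1)%R -> blk X' j = blk X j.
Proof. by move=> /negbTE H1 /negbTE H2; rewrite /blk /X' /= H1 H2 !addn0. Qed.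

Lemma blk_k1 : blk X' (k + 1)%R =
  nseq (ay X (k + 1)%R) (false, (k + 1)%R) ++ nseq (ax X (k + 1)%R) (true, (k + 1)%R)
  ++ nseq b (true, (k + 1)%R).
Proof.
rewrite /blk /X' /= eqxx.
have -> : ((k + 1)%R == k) = false by apply/eqP; lia.
by rewrite !addn0 nseqD catA.
Qed.

Lemma blk_k : blk X' k =
  nseq b (false, k) ++ nseq (ay X k) (false, k) ++ nseq (ax X k) (true, k).
Proof.
rewrite /blk /X' /= eqxx.
have -> : (k == (k + 1)%R) = false by apply/eqP; lia.
by rewrite !addn0 addnC nseqD catA.
Qed.

Lemma nf_sig_add M : (absz k < M)%N ->
  nf (signature_win M X') = nf (signature_win M X).
Proof.
move=> HM.
pose f i := (Posz M - Posz i)%R.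
have hw : window M = map f (iota 0 (M + M).+1) by [].
pose d := absz (Posz M - (k + 1))%R.
have hd : Posz d = (Posz M - (k + 1))%R by rewrite /d; lia.
pose r := ((M + M).+1 - (d + 2))%N.
have hlen : (M + M).+1 = (d + (2 + r))%N by rewrite /r; lia.
rewrite !sig_blk hw hlen !iotaD !map_cat !flatten_cat.
have -> : map f (iota (0 + d) 2) = [:: (k + 1)%R; k].
  by rewrite /= /f; congr (_ :: _ :: _); lia.
have E1 : map (blk X') (map f (iota 0 d)) = map (blk X) (map f (iota 0 d)).
  rewrite -!map_comp; apply/eq_in_map => i; rewrite mem_iota => Hi /=.
  by apply: blk_ne; apply/eqP; rewrite /f; lia.
have E2 : map (blk X') (map f (iota (0 + d + 2) r)) = map (blk X) (map f (iota (0 + d + 2) r)).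
  rewrite -!map_comp; apply/eq_in_map => i; rewrite mem_iota => Hi /=.
  by apply: blk_ne; apply/eqP; rewrite /f; lia.
rewrite E1 E2 /= blk_k1 blk_k !cats0 -!catA.
set W1 := flatten _. set W2 := flatten _.
rewrite (catA W1) (catA (W1 ++ _)) nf_cancel // -!catA.
by [].
Qed.
End Core.

Theorem mainTheorem6 (X : arr) (k : int) (a : nat) :
  finsupp X ->
  [/\ Fmap (Xarr k (2 * a)) = Xarr (k + 2)%R (2 * a),
      Fmap (arr_add X (Xarr k (2 * a))) = arr_add (Fmap X) (Xarr (k + 2)%R (2 * a))
    & ftilde (arr_add X (Xarr k (2 * a)))
      = omap (fun Y => arr_add Y (Xarr k (2 * a))) (ftilde X)].
Proof.
move=> [N HN]; split; [exact: Fmap_Xarr | exact: Fmap_add |].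
set b := (2 * a)%N.
pose M := maxn N (absz k).+1.
have HX : bounds M X := @bounds_mono N M X HN (leq_maxl _ _).
have HX' : bounds M (arr_add X (Xarr k b)).
  move=> j Hj; have [h1 h2] := HX j Hj; rewrite /= h1 h2.
  have -> : (j == (k + 1)%R) = false by apply/eqP; lia.
  have -> : (j == k) = false by apply/eqP; lia.
  done.
rewrite /ftilde (@red_sig _ M HX') (@red_sig X M HX) (@nf_sig_add X k b M); last lia.
case E: [seq p <- _ | p.1] => [|p t] //=.
have : p \in [seq p <- nf (signature_win M X) | p.1] by rewrite E inE eqxx.
rewrite mem_filter => /andP [Hp1 Hp].
have Hpos := @mem_sig M X p (@nf_sub _ p Hp) Hp1.
congr Some; rewrite /arr_add /arr_sub /=; congr Arr; apply: functional_extensionality => j.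
  move: Hpos; case: p {E Hp1 Hp} => c q /= Hpos; repeat case: ifP => [/eqP ?|?]; subst; lia.
by case: ifP => _; case: ifP => _; lia.
Qed.
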